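(* Let $\varphi \in \mathcal{L}^s(\Theta;\tau)$ for some $s\in\{\pm,+,-\}$, let $\rho$ be a valuation of $\Theta$ and let $i$ be an iteration variable. If $i \mathrel{\mathrm{Pos}} \varphi$, then $n \le m$ implies $[\![\varphi]\!]\rho[n/i] \subseteq [\![\varphi]\!]\rho[m/i]$. If $i \mathrel{\mathrm{Neg}} \varphi$, then $m \le n$ implies $[\![\varphi]\!]\rho[n/i] \subseteq [\![\varphi]\!]\rho[m/i]$.
   Context: Pure types: closed types of $\tau ::= \mathbf{1} \mid \tau\times\tau \mid \tau\to\tau \mid \tau+\tau \mid \alpha \mid \mu\alpha.\tau$, interpreted as Scott domains: $[\![\mathbf{1}]\!]=\{\bot\le\top\}$; products componentwise with projections $\pi_1,\pi_2$; $[\![\tau\to\sigma]\!]$ = Scott-continuous functions with pointwise order; $[\![\tau_1+\tau_2]\!]$ = disjoint union with a new bottom, with injections $\mathrm{inj}_i$; $[\![\mu\alpha.\tau]\!]$ = canonical bilimit solution with inverse isomorphisms $\mathrm{fold}:[\![\tau[\mu\alpha.\tau/\alpha]]\!]\to[\![\mu\alpha.\tau]\!]$, $\mathrm{unfold}$. Iteration terms: $t ::= i \mid 0 \mid t+1$. Fixpoint contexts $\Theta = X_1:\sigma_1,\dots,X_n:\sigma_n$. For $s\in\{\pm,+,-\}$, $\mathcal{L}^s(\Theta;\tau)$ is generated by: $\mathrm{True},\mathrm{False}$; closure under $\wedge,\vee$; $\langle()\rangle\in\mathcal{L}^s(\Theta;\mathbf{1})$; $\langle\pi_i\rangle\varphi$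 (type $\tau_1\times\tau_2$, $\varphi$ of type $\tau_i$); $\langle\mathrm{inj}_i\rangle\varphi$ (type $\tau_1+\tau_2$, $\varphi$ of type $\tau_i$); $\langle\mathrm{fold}\rangle\varphi$ (type $\mu\alpha.\tau$, $\varphi$ of type $\tau[\mu\alpha.\tau/\alpha]$); $X$ if $(X:\tau)\in\Theta$; weakening of $\Theta$; $(\mu^t X)\varphi,(\nu^t X)\varphi\in\mathcal{L}^s(\Theta;\tau)$ if $\varphi\in\mathcal{L}^s(\Theta,X:\tau;\tau)$; $(\exists i)\varphi\in\mathcal{L}^+(\Theta;\tau)$ if $\varphi\in\mathcal{L}^+(\Theta;\tau)$ and $i \mathrel{\mathrm{Pos}} \varphi$; $(\forall i)\varphi\in\mathcal{L}^-(\Theta;\tau)$ if $\varphi\in\mathcal{L}^-(\Theta;\tau)$ and $i\mathrel{\mathrm{Neg}}\varphi$; $\psi\Rightarrow\varphi\in\mathcal{L}^s(\,;\sigma\to\tau)$ if $\psi\in\mathcal{L}^{-s}(\,;\sigma)$ and $\varphi\in\mathcal{L}^s(\,;\tau)$, where $-\pm=\pm$, $-+=-$, $--=+$. The predicates Pos, Neg are inductively defined: $i\mathrel{\mathrm{Pos}}\varphi$ and $i\mathrel{\mathrm{Neg}}\varphi$ hold if $i$ not free in $\varphi$; both preserved by $\wedge,\vee$ and the modalities $\langle\pi_j\rangle,\langle\mathrm{inj}_j\rangle,\langle\mathrm{fold}\rangle$; $i\mathrel{\mathrm{Pos}}(\psi\Rightarrow\varphi)$ if $i\mathrel{\mathrm{Neg}}\psi$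 and $i\mathrel{\mathrm{Pos}}\varphi$; $i\mathrel{\mathrm{Neg}}(\psi\Rightarrow\varphi)$ if $i\mathrel{\mathrm{Pos}}\psi$ and $i\mathrel{\mathrm{Neg}}\varphi$; $i\mathrel{\mathrm{Pos}}(\exists j)\varphi$ if $i\mathrel{\mathrm{Pos}}\varphi$; $i\mathrel{\mathrm{Neg}}(\forall j)\varphi$ if $i\mathrel{\mathrm{Neg}}\varphi$; $i\mathrel{\mathrm{Pos}}(\mu^tX)\varphi$ if $i\mathrel{\mathrm{Pos}}\varphi$; $i\mathrel{\mathrm{Pos}}(\nu^tX)\varphi$ if $i\mathrel{\mathrm{Pos}}\varphi$ and $i$ not free in $t$; $i\mathrel{\mathrm{Neg}}(\nu^tX)\varphi$ if $i\mathrel{\mathrm{Neg}}\varphi$; $i\mathrel{\mathrm{Neg}}(\mu^tX)\varphi$ if $i\mathrel{\mathrm{Neg}}\varphi$ and $i$ not free in $t$. Semantics: a valuation $\rho$ of $\Theta$ maps each $(X:\sigma)\in\Theta$ to $\rho(X)\subseteq[\![\sigma]\!]$ and iteration variables to naturals ($[\![t]\!]\rho\in\mathbb{N}$). $[\![\mathrm{True}]\!]\rho=[\![\tau]\!]$, $[\![\mathrm{False}]\!]\rho=\emptyset$, $\wedge,\vee$ are $\cap,\cup$, $[\![X]\!]\rho=\rho(X)$, $[\![\langle()\rangle]\!]\rho=\{\top\}$, $[\![\langle\pi_i\rangle\varphi]\!]\rho=\{x\mid \pi_i(x)\in[\![\varphi]\!]\rho\}$, $[\![\langle\mathrm{inj}_i\rangle\varphi]\!]\rho=\{\mathrm{inj}_i(x)\mid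 x\in[\![\varphi]\!]\rho\}$, $[\![\langle\mathrm{fold}\rangle\varphi]\!]\rho=\{x\mid\mathrm{unfold}(x)\in[\![\varphi]\!]\rho\}$, $[\![\psi\Rightarrow\varphi]\!]\rho=\{f\mid\forall x\in[\![\psi]\!]\rho,\ f(x)\in[\![\varphi]\!]\rho\}$, $[\![(\exists i)\varphi]\!]\rho=\bigcup_{n}[\![\varphi]\!]\rho[n/i]$, $[\![(\forall i)\varphi]\!]\rho=\bigcap_{n}[\![\varphi]\!]\rho[n/i]$, and with $F(S)=[\![\varphi]\!]\rho[S/X]$, $n=[\![t]\!]\rho$: $[\![(\mu^tX)\varphi]\!]\rho=F^n(\emptyset)$, $[\![(\nu^tX)\varphi]\!]\rho=F^n([\![\tau]\!])$. *)

(* Defs.v *)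
From Stdlib Require Import List Arith PeanoNat.
Import ListNotations.
Set Implicit Arguments.

(** * Pure types (de Bruijn type variables; alpha = TVar) *)
Inductive ty : Type :=
| TUnit : ty
| TProd : ty -> ty -> ty
| TArr  : ty -> ty -> ty
| TSum  : ty -> ty -> ty
| TVar  : nat -> ty
| TMu   : ty -> ty.

Fixpoint shift (c : nat) (t : ty) : ty :=
  match t with
  | TUnit => TUnit
  | TProd a b => TProd (shift c a) (shift c b)
  | TArr a b => TArr (shift c a) (shift c b)
  | TSum a b => TSum (shift c a) (shift c b)
  | TVar k => if k <? c then TVar k else TVar (S k)
  | TMu a => TMu (shift (S c) a)
  end.

Fixpoint subst (k : nat) (u : ty) (t : ty) : ty :=
  match t with
  | TUnit => TUnit
  | TProd a b => TProd (subst k u a) (subst k u b)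
  | TArr a b => TArr (subst k u a) (subst k u b)
  | TSum a b => TSum (subst k u a) (subst k u b)
  | TVar m => if m =? k then u else if m <? k then TVar m else TVar (pred m)
  | TMu a => TMu (subst (S k) (shift 0 u) a)
  end.

Definition unroll (t : ty) : ty := subst 0 (TMu t) t.

(** An abstract interpretation: carriers with the structural maps used by the
   semantics (top of [[1]], projections, injections, fold/unfold inverse
   isomorphisms, and function application).  The Scott-domain model of the
   paper is an instance. *)
Unset Implicit Arguments.
Record model : Type := {
  D : ty -> Type;
  mtop : D TUnit;
  mpi1 : forall a b, D (TProd a b) -> D a;
  mpi2 : forall a b, D (TProd a b) -> D b;
  minj1 : forall a b, D a -> D (TSum a b);
  minj2 : forall a b, D b -> D (TSum a b);
  mfold : forall t, D (unroll t) -> D (TMu t);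
  munfold : forall t, D (TMu t) -> D (unroll t);
  mfold_unfold : forall (t : ty) (x : D (TMu t)), mfold t (munfold t x) = x;
  munfold_fold : forall (t : ty) (x : D (unroll t)), munfold t (mfold t x) = x;
  mapp : forall a b, D (TArr a b) -> D a -> D b
}.

Set Implicit Arguments.
Inductive iterm : Type :=
| IVar : nat -> iterm
| IZero : iterm
| ISucc : iterm -> iterm.

Fixpoint ieval (iota : nat -> nat) (t : iterm) : nat :=
  match t with
  | IVar i => iota i
  | IZero => 0
  | ISucc t => S (ieval iota t)
  end.

Fixpoint ioccurs (i : nat) (t : iterm) : bool :=
  match t with
  | IVar j => i =? j
  | IZero => false
  | ISucc t => ioccurs i t
  end.

Definition ctx := list ty.

Inductive var : ctx -> ty -> Type :=
| VZ : forall Th t, var (t :: Th) t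
| VS : forall Th s t, var Th t -> var (s :: Th) t.

Inductive form : ctx -> ty -> Type :=
| FTrue  : forall Th t, form Th t
| FFalse : forall Th t, form Th t
| FAnd   : forall Th t, form Th t -> form Th t -> form Th t
| FOr    : forall Th t, form Th t -> form Th t -> form Th t
| FUnit  : forall Th, form Th TUnit
| FPi1   : forall Th a b, form Th a -> form Th (TProd a b)
| FPi2   : forall Th a b, form Th b -> form Th (TProd a b)
| FInj1  : forall Th a b, form Th a -> form Th (TSum a b)
| FInj2  : forall Th a b, form Th b -> form Th (TSum a b)
| FFold  : forall Th t, form Th (unroll t) -> form Th (TMu t)
| FVar   : forall Th t, var Th t -> form Th t
| FWk    : forall Th s t, form Th t -> form (s :: Th) t
| FMu    : forall Th t, iterm -> form (t :: Th) t -> form Th t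
| FNu    : forall Th t, iterm -> form (t :: Th) t -> form Th t
| FEx    : forall Th t, nat -> form Th t -> form Th t
| FAll   : forall Th t, nat -> form Th t -> form Th t
| FImp   : forall a b, form [] a -> form [] b -> form [] (TArr a b).

Fixpoint occurs (i : nat) {Th t} (f : form Th t) : bool :=
  match f with
  | FTrue _ _ | FFalse _ _ | FUnit _ | FVar _ => false
  | FAnd f1 f2 | FOr f1 f2 => occurs i f1 || occurs i f2
  | FPi1 _ f | FPi2 _ f | FInj1 _ f | FInj2 _ f | FFold _ f | FWk _ f => occurs i f
  | FMu tm f | FNu tm f => ioccurs i tm || occurs i f
  | FEx j f | FAll j f => if i =? j then false else occurs i f
  | FImp f1 f2 => occurs i f1 || occurs i f2
  end.

Inductive Pos (i : nat) : forall Th t, form Th t -> Prop :=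
| Pos_nf : forall Th t (f : form Th t), occurs i f = false -> Pos i f
| Pos_and : forall Th t (f g : form Th t), Pos i f -> Pos i g -> Pos i (FAnd f g)
| Pos_or : forall Th t (f g : form Th t), Pos i f -> Pos i g -> Pos i (FOr f g)
| Pos_pi1 : forall Th a b (f : form Th a), Pos i f -> Pos i (FPi1 b f)
| Pos_pi2 : forall Th a b (f : form Th b), Pos i f -> Pos i (FPi2 a f)
| Pos_inj1 : forall Th a b (f : form Th a), Pos i f -> Pos i (FInj1 b f)
| Pos_inj2 : forall Th a b (f : form Th b), Pos i f -> Pos i (FInj2 a f)
| Pos_fold : forall Th t (f : form Th (unroll t)), Pos i f -> Pos i (FFold t f)
| Pos_wk : forall Th s t (f : form Th t), Pos i f -> Pos i (FWk s f)
| Pos_imp : forall a b (f : form [] a) (g : form [] b),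
    Neg i f -> Pos i g -> Pos i (FImp f g)
| Pos_ex : forall Th t j (f : form Th t), Pos i f -> Pos i (FEx j f)
| Pos_mu : forall Th t tm (f : form (t :: Th) t), Pos i f -> Pos i (FMu tm f)
| Pos_nu : forall Th t tm (f : form (t :: Th) t),
    Pos i f -> ioccurs i tm = false -> Pos i (FNu tm f)
with Neg (i : nat) : forall Th t, form Th t -> Prop :=
| Neg_nf : forall Th t (f : form Th t), occurs i f = false -> Neg i f
| Neg_and : forall Th t (f g : form Th t), Neg i f -> Neg i g -> Neg i (FAnd f g)
| Neg_or : forall Th t (f g : form Th t), Neg i f -> Neg i g -> Neg i (FOr f g)
| Neg_pi1 : forall Th a b (f : form Th a), Neg i f -> Neg i (FPi1 b f)
| Neg_pi2 : forall Th a b (f : form Th b), Neg i f -> Neg i (FPi2 a f)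
| Neg_inj1 : forall Th a b (f : form Th a), Neg i f -> Neg i (FInj1 b f)
| Neg_inj2 : forall Th a b (f : form Th b), Neg i f -> Neg i (FInj2 a f)
| Neg_fold : forall Th t (f : form Th (unroll t)), Neg i f -> Neg i (FFold t f)
| Neg_wk : forall Th s t (f : form Th t), Neg i f -> Neg i (FWk s f)
| Neg_imp : forall a b (f : form [] a) (g : form [] b),
    Pos i f -> Neg i g -> Neg i (FImp f g)
| Neg_all : forall Th t j (f : form Th t), Neg i f -> Neg i (FAll j f)
| Neg_nu : forall Th t tm (f : form (t :: Th) t), Neg i f -> Neg i (FNu tm f)
| Neg_mu : forall Th t tm (f : form (t :: Th) t),
    Neg i f -> ioccurs i tm = false -> Neg i (FMu tm f).

Inductive pol : Type := PBoth | PPlus | PMinus.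

Definition negp (s : pol) : pol :=
  match s with PBoth => PBoth | PPlus => PMinus | PMinus => PPlus end.

Inductive inL : pol -> forall Th t, form Th t -> Prop :=
| L_true : forall s Th t, inL s (FTrue Th t)
| L_false : forall s Th t, inL s (FFalse Th t)
| L_and : forall s Th t (f g : form Th t), inL s f -> inL s g -> inL s (FAnd f g)
| L_or : forall s Th t (f g : form Th t), inL s f -> inL s g -> inL s (FOr f g)
| L_unit : forall s Th, inL s (FUnit Th)
| L_pi1 : forall s Th a b (f : form Th a), inL s f -> inL s (FPi1 b f)
| L_pi2 : forall s Th a b (f : form Th b), inL s f -> inL s (FPi2 a f)
| L_inj1 : forall s Th a b (f : form Th a), inL s f -> inL s (FInj1 b f)
| L_inj2 : forall s Th a b (f : form Th b), inL s f -> inL s (FInj2 a f)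
| L_fold : forall s Th t (f : form Th (unroll t)), inL s f -> inL s (FFold t f)
| L_var : forall s Th t (x : var Th t), inL s (FVar x)
| L_wk : forall s Th u t (f : form Th t), inL s f -> inL s (FWk u f)
| L_mu : forall s Th t tm (f : form (t :: Th) t), inL s f -> inL s (FMu tm f)
| L_nu : forall s Th t tm (f : form (t :: Th) t), inL s f -> inL s (FNu tm f)
| L_ex : forall Th t i (f : form Th t), inL PPlus f -> Pos i f -> inL PPlus (FEx i f)
| L_all : forall Th t i (f : form Th t), inL PMinus f -> Neg i f -> inL PMinus (FAll i f)
| L_imp : forall s a b (f : form [] a) (g : form [] b),
    inL (negp s) f -> inL s g -> inL s (FImp f g).

Definition set (A : Type) := A -> Prop.

Fixpoint env (M : model) (Th : ctx) : Type :=
  match Th with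
  | [] => unit
  | t :: Th' => (set (D M t) * env M Th')%type
  end.

Fixpoint lookup (M : model) {Th t} (x : var Th t) : env M Th -> set (D M t) :=
  match x in var Th t return env M Th -> set (D M t) with
  | VZ _ _ => fun e => fst e
  | VS _ x' => fun e => lookup M x' (snd e)
  end.

Definition upd (iota : nat -> nat) (i n : nat) : nat -> nat :=
  fun j => if j =? i then n else iota j.

Fixpoint iter {A} (n : nat) (F : A -> A) (x : A) : A :=
  match n with 0 => x | S n => F (iter n F x) end.

Fixpoint sem (M : model) {Th t} (f : form Th t)
  : env M Th -> (nat -> nat) -> set (D M t) :=
  match f in form Th t return env M Th -> (nat -> nat) -> set (D M t) with
  | FTrue _ _ => fun _ _ _ => True
  | FFalse _ _ => fun _ _ _ => False
  | FAnd f1 f2 => fun r io x => sem M f1 r io x /\ sem M f2 r io x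
  | FOr f1 f2 => fun r io x => sem M f1 r io x \/ sem M f2 r io x
  | FUnit _ => fun _ _ x => x = mtop M
  | FPi1 _ f => fun r io x => sem M f r io (mpi1 M _ _ x)
  | FPi2 _ f => fun r io x => sem M f r io (mpi2 M _ _ x)
  | FInj1 _ f => fun r io x => exists y, sem M f r io y /\ x = minj1 M _ _ y
  | FInj2 _ f => fun r io x => exists y, sem M f r io y /\ x = minj2 M _ _ y
  | FFold _ f => fun r io x => sem M f r io (munfold M _ x)
  | FVar x => fun r _ => lookup M x r
  | FWk _ f => fun r io => sem M f (snd r) io
  | FMu tm f => fun r io =>
      iter (ieval io tm) (fun S => sem M f (S, r) io) (fun _ => False)
  | FNu tm f => fun r io =>
      iter (ieval io tm) (fun S => sem M f (S, r) io) (fun _ => True)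
  | FEx j f => fun r io x => exists n, sem M f r (upd io j n) x
  | FAll j f => fun r io x => forall n, sem M f r (upd io j n) x
  | FImp f1 f2 => fun _ io g =>
      forall x, sem M f1 tt io x -> sem M f2 tt io (mapp M _ _ g x)
  end.

(* Main.v *)
Require Import Defs.
From Stdlib Require Import List Arith PeanoNat Lia Bool FunctionalExtensionality PropExtensionality.
Import ListNotations.

Definition sub {A : Type} (X Y : A -> Prop) := forall x, X x -> Y x.

Lemma iter_mono2 {A : Type} (F G : (A -> Prop) -> (A -> Prop)) X Y k :
  sub X Y -> (forall P Q, sub P Q -> sub (F P) (G Q)) -> sub (iter k F X) (iter k G Y).
Proof. intros H HF; induction k; simpl; auto. Qed.

Lemma iter_bot_chain {A : Type} (F : (A -> Prop) -> (A -> Prop)) k k' :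
  (forall P Q, sub P Q -> sub (F P) (F Q)) -> k <= k' ->
  sub (iter k F (fun _ => False)) (iter k' F (fun _ => False)).
Proof.
  intros HF Hk.
  assert (Hs : forall k, sub (iter k F (fun _ => False)) (iter (S k) F (fun _ => False))).
  { induction k0; simpl. intros x [] . apply HF. exact IHk0. }
  induction Hk. intros x h; exact h. intros x h. apply Hs. apply IHHk. exact h.
Qed.

Lemma iter_top_chain {A : Type} (F : (A -> Prop) -> (A -> Prop)) k k' :
  (forall P Q, sub P Q -> sub (F P) (F Q)) -> k' <= k ->
  sub (iter k F (fun _ => True)) (iter k' F (fun _ => True)).
Proof.
  intros HF Hk.
  assert (Hs : forall k, sub (iter (S k) F (fun _ => True)) (iter k F (fun _ => True))).
  { induction k0; simpl. intros x _; exact I. apply HF. exact IHk0. }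
  induction Hk. intros x h; exact h. intros x h. apply IHHk. apply Hs. exact h.
Qed.

Fixpoint env_le (M : model) (Th : ctx) : env M Th -> env M Th -> Prop :=
  match Th return env M Th -> env M Th -> Prop with
  | [] => fun _ _ => True
  | t :: Th' => fun r r' => sub (fst r) (fst r') /\ env_le M Th' (snd r) (snd r')
  end.

Lemma lookup_mono M Th t (x : var Th t) : forall r r', env_le M Th r r' ->
  sub (lookup M x r) (lookup M x r').
Proof. induction x; simpl; intros r r' [H1 H2]; auto. Qed.

Lemma sem_env_mono M Th t (f : form Th t) : forall r r' io, env_le M Th r r' ->
  sub (sem M f r io) (sem M f r' io).
Proof.
  induction f; simpl; intros r r' io Hr; unfold sub in *; intros x0 h.
  all: try solve [firstorder].
  all: try (destruct h as [y [h1 h2]]; exists y; split; eauto; fail).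
  all: try (eapply lookup_mono; eauto; fail).
  all: try (destruct Hr; eauto; fail).
  - revert x0 h. apply iter_mono2. intros x []. intros P Q HPQ. intros y hy.
    apply (IHf (P, r) (Q, r')); simpl; auto.
  - revert x0 h. apply iter_mono2. intros x _; exact I. intros P Q HPQ. intros y hy.
    apply (IHf (P, r) (Q, r')); simpl; auto.
  - destruct h as [k hk]; exists k; eauto.
Qed.

Lemma F_mono M Th t (f : form (t :: Th) t) r io :
  forall P Q, sub P Q -> sub (sem M f (P, r) io) (sem M f (Q, r) io).
Proof.
  intros P Q H. apply sem_env_mono. simpl. split; auto.
  clear. induction Th; simpl; auto. split. intros x h; exact h. apply IHTh.
Qed.

Lemma ieval_agree i tm io io' : ioccurs i tm = false ->
  (forall j, j <> i -> io j = io' j) -> ieval io tm = ieval io' tm.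
Proof.
  induction tm; simpl; intros H Hj; auto.
  apply Hj. intro e; subst. rewrite Nat.eqb_refl in H; discriminate.
Qed.

Lemma ieval_mono i tm io n m : n <= m ->
  ieval (upd io i n) tm <= ieval (upd io i m) tm.
Proof.
  induction tm; simpl; intros; try lia.
  unfold upd. destruct (n0 =? i); lia.
  all: try (destruct h as [k hk]; exists k; eauto).
Qed.

Lemma sem_agree M i Th t (f : form Th t) : occurs i f = false ->
  forall r io io', (forall j, j <> i -> io j = io' j) -> sem M f r io = sem M f r io'.
Proof.
  induction f; simpl; intros Ho r io io' Hj; auto;
    repeat match goal with H : (_ || _) = false |- _ => apply orb_false_iff in H; destruct H end.
  all: try (rewrite (IHf1 H r io io' Hj), (IHf2 H0 r io io' Hj); reflexivity).
  all: try (rewrite (IHf Ho r io io' Hj); reflexivity).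
  all: try (rewrite (IHf Ho _ io io' Hj); reflexivity).
  - rewrite (ieval_agree i i0 io io' H Hj).
    replace (fun S => sem M f (S, r) io) with (fun S => sem M f (S, r) io'); auto.
    apply functional_extensionality; intro S. symmetry; apply IHf; auto.
  - rewrite (ieval_agree i i0 io io' H Hj).
    replace (fun S => sem M f (S, r) io) with (fun S => sem M f (S, r) io'); auto.
    apply functional_extensionality; intro S. symmetry; apply IHf; auto.
  - apply functional_extensionality; intro x.
    apply propositional_extensionality.
    destruct (i =? n) eqn:E.
    + apply Nat.eqb_eq in E; subst.
      assert (Heq : forall k, upd io n k = upd io' n k).
      { intro k. apply functional_extensionality; intro j.
        unfold upd. destruct (Nat.eqb_spec j n); auto. }
      setoid_rewrite Heq. tauto.
    + apply Nat.eqb_neq in E.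
      split; intros [k hk]; exists k;
      [rewrite <- (IHf Ho r (upd io n k)) | rewrite (IHf Ho r (upd io n k) (upd io' n k))]; auto;
      intros j hj; unfold upd; destruct (j =? n); auto.
  - apply functional_extensionality; intro x.
    apply propositional_extensionality.
    destruct (i =? n) eqn:E.
    + apply Nat.eqb_eq in E; subst.
      assert (Heq : forall k, upd io n k = upd io' n k).
      { intro k. apply functional_extensionality; intro j.
        unfold upd. destruct (Nat.eqb_spec j n); auto. }
      setoid_rewrite Heq. tauto.
    + apply Nat.eqb_neq in E.
      split; intros hk k; specialize (hk k);
      [rewrite <- (IHf Ho r (upd io n k) (upd io' n k)) | rewrite (IHf Ho r (upd io n k) (upd io' n k))]; auto;
      intros j hj; unfold upd; destruct (j =? n); auto.
  - rewrite (IHf1 H tt io io' Hj), (IHf2 H0 tt io io' Hj); reflexivity.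
Qed.

Scheme Pos_ind2 := Induction for Pos Sort Prop
with Neg_ind2 := Induction for Neg Sort Prop.

Lemma upd_same io i n k : upd (upd io i n) i k = upd io i k.
Proof. apply functional_extensionality; intro j; unfold upd; destruct (j =? i); auto. Qed.

Lemma upd_comm io i j n k : i <> j -> upd (upd io i n) j k = upd (upd io j k) i n.
Proof.
  intro H; apply functional_extensionality; intro l; unfold upd.
  destruct (Nat.eqb_spec l j), (Nat.eqb_spec l i); subst; auto; congruence.
Qed.

Lemma upd_agree io i n m : forall j, j <> i -> upd io i n j = upd io i m j.
Proof. intros j hj; unfold upd; apply Nat.eqb_neq in hj; rewrite hj; auto. Qed.

Lemma main M i :
  (forall Th t (f : form Th t), Pos i f -> forall r io n m, n <= m ->
     sub (sem M f r (upd io i n)) (sem M f r (upd io i m))) /\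
  (forall Th t (f : form Th t), Neg i f -> forall r io n m, m <= n ->
     sub (sem M f r (upd io i n)) (sem M f r (upd io i m))).
Proof.
  split; [apply (Pos_ind2 i (fun Th t f _ => forall r io n m, n <= m ->
     sub (sem M f r (upd io i n)) (sem M f r (upd io i m))) (fun Th t f _ => forall r io n m, m <= n ->
     sub (sem M f r (upd io i n)) (sem M f r (upd io i m))))
  | apply (Neg_ind2 i (fun Th t f _ => forall r io n m, n <= m ->
     sub (sem M f r (upd io i n)) (sem M f r (upd io i m))) (fun Th t f _ => forall r io n m, m <= n ->
     sub (sem M f r (upd io i n)) (sem M f r (upd io i m))))];
  clear; intros; unfold sub in *; intros x0 hx; simpl in *.
  all: try solve [firstorder].
  all: try (rewrite <- (sem_agree M i _ _ f e r (upd io i n) (upd io i m) (upd_agree io i n m)); exact hx).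
  all: try (destruct hx as [y [h1 h2]]; exists y; split; eauto; fail).
  all: try (intros x hx1; eapply H0; [ | apply hx; eapply H; [ | exact hx1] ]; lia).
  all: try (destruct hx as [k hk]; exists k;
    destruct (Nat.eq_dec j i) as [->|Hji];
    [ rewrite upd_same in *; exact hk
    | rewrite upd_comm in * by auto; eapply H; eauto]; fail).
  all: try (intro k; specialize (hx k);
    destruct (Nat.eq_dec j i) as [->|Hji];
    [ rewrite upd_same in *; exact hx
    | rewrite upd_comm in * by auto; eapply H; eauto]; fail).
  all: try (eapply iter_bot_chain; [apply F_mono | apply ieval_mono; exact H0 |];
    revert x0 hx; apply iter_mono2; [intros x [] | intros P Q HPQ y hy;
    eapply H; eauto; eapply F_mono; eauto]; fail).
  all: try (eapply iter_top_chain; [apply F_mono | apply ieval_mono; exact H0 |];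
    revert x0 hx; apply iter_mono2; [intros x h; exact h | intros P Q HPQ y hy;
    eapply H; eauto; eapply F_mono; eauto]; fail).
  all: try (match goal with He : ioccurs ?i ?tm = false, hx : iter (ieval (upd ?io ?i ?a) ?tm) _ _ _ |- iter (ieval (upd ?io ?i ?b) ?tm) _ _ _ =>
      rewrite <- (ieval_agree i tm (upd io i a) (upd io i b) He (upd_agree io i a b)) end;
    revert x0 hx; apply iter_mono2; [intros x h; exact h | intros P Q HPQ y hy;
    eapply H; eauto; eapply F_mono; eauto]; fail).
  all: try (match goal with He : ioccurs ?i ?tm = false, hx : iter (ieval (upd ?io ?i ?a) ?tm) _ _ _ |- iter (ieval (upd ?io ?i ?b) ?tm) _ _ _ =>
      rewrite <- (ieval_agree i tm (upd io i a) (upd io i b) He (upd_agree io i a b)) end;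
    revert x0 hx; apply iter_mono2; [intros x [] | intros P Q HPQ y hy;
    eapply H; eauto; eapply F_mono; eauto]; fail).
Qed.

Theorem lemma5p5 (M : model) (s : pol) (Th : ctx) (t : ty) (phi : form Th t)
  (Hphi : inL s phi) (rho : env M Th) (iota : nat -> nat) (i : nat) :
  (Pos i phi -> forall n m : nat, n <= m ->
     forall x, sem M phi rho (upd iota i n) x -> sem M phi rho (upd iota i m) x) /\
  (Neg i phi -> forall n m : nat, m <= n ->
     forall x, sem M phi rho (upd iota i n) x -> sem M phi rho (upd iota i m) x).
Proof.
  destruct (main M i) as [HP HN]. split; intros H n m Hnm x hx.
  - eapply HP; eauto.
  - eapply HN; eauto.
Qed.
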